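(* For the FCIQMC step, on the event $M_t\ge m$, $$\mathbb{E}\bigl(\|F(A,v_t)-Av_t\|_2^2\mid\mathcal{F}_t\bigr)\le C_e\frac{\|A\|_1^2\|v_t\|_1^2}{m},\qquad C_e=\frac{\max_k(\|a_k\|_0-2)\|a_{o,k}\|_2^2+\frac12}{\|A\|_1^2}.$$
   Context: Let $A\in\mathbb{R}^{N\times N}$ be real symmetric, with every diagonal entry nonzero and every column having at least 2 nonzero entries. Write $A=A_d+A_o$ with $A_d$ the diagonal part and $A_o$ the off-diagonal part; $a_k=A(:,k)$, $a_{o,k}=A_o(:,k)$; $\|x\|_0$ is the number of nonzero entries; $\|A\|_1=\max_k\sum_i|A_{ik}|$; $e_l$ the $l$-th standard basis vector. FCIQMC step: the current iterate $v_t\in\mathbb{Z}^N$ is represented by $M_t=\|v_t\|_1$ signed particles, $|v_t(k)|$ particles at location $k$ each with sign $\mathrm{sgn}(v_t(k))$. For each particle with location $k$ and sign $s$, independently of all other particles (conditionally on $\mathcal F_t$): (Spawning) choose $l$ uniformly at random among the indices $j$ with $A_o(j,k)\neq0$; let $Q=\|a_{o,k}\|_0|A(l,k)|$ and $n=\lfloor Q\rfloor$ w.p. $1-(Q-\lfloor Q\rfloor)$, $n=\lfloor Q\rfloor+1$ w.p. $Q-\lfloor Q\rfloor$; contribute $n\,\mathrm{sgn}(A(l,k)s)\,e_l$. (Diagonal) independently, $Q=|A(k,k)|$, $n$ by the same rounding rule, contribute $n\,\mathrm{sgn}(A(k,k)s)\,e_k$. (Annihilation) $F(A,v_t)=v_{t+1}$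 is the sum of all contributions. $\mathcal{F}_t=\sigma(v_1,\dots,v_t)$. *)

(* Defs.v *)
From HB Require Import structures.
From mathcomp Require Import all_boot all_order all_algebra.
Set Implicit Arguments. Unset Strict Implicit. Unset Printing Implicit Defensive.
Import Order.TTheory GRing.Theory Num.Theory.
Local Open Scope ring_scope.

Section FCIQMC.
Variables (R : archiRealFieldType) (N : nat) (A : 'M[R]_N).

Definition nnz_col (k : 'I_N) : nat := #|[set i | A i k != 0]|.
Definition nnz_off (k : 'I_N) : nat := #|[set j | (j != k) && (A j k != 0)]|.
Definition sqnorm_off (k : 'I_N) : R := \sum_(i | i != k) A i k ^+ 2.
Definition norm1_mx : R := \big[Num.max/0]_k \sum_i `|A i k|.
Definition norm1_int (v : 'I_N -> int) : R := \sum_k `|(v k)%:~R : R|.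
Definition Amulv (v : 'I_N -> int) (i : 'I_N) : R := \sum_k A i k * (v k)%:~R.

Definition frac (x : R) : R := x - (Num.floor x)%:~R.
Definition round_prob (Q : R) (b : bool) : R := if b then frac Q else 1 - frac Q.
Definition round_val (Q : R) (b : bool) : R := (Num.floor Q + b%:Z)%:~R.

(* A particle is a pair (location k, copy index c < |v k|); its sign is sgn(v k).
   Its random outcome is (l, b1, b2): spawning target l, spawning rounding bit b1,
   diagonal rounding bit b2. *)
Definition particle (v : 'I_N -> int) := {k : 'I_N & 'I_(absz (v k))}.
Definition outcome := ('I_N * bool * bool)%type.

Definition sgnv (v : 'I_N -> int) (k : 'I_N) : R := Num.sg ((v k)%:~R : R).

Definition particle_prob (k : 'I_N) (o : outcome) : R :=
  let: (l, b1, b2) := o in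
  (if (l != k) && (A l k != 0) then ((nnz_off k)%:R)^-1 else 0)
  * round_prob ((nnz_off k)%:R * `|A l k|) b1
  * round_prob `|A k k| b2.

Definition particle_contrib (k : 'I_N) (s : R) (o : outcome) (i : 'I_N) : R :=
  let: (l, b1, b2) := o in
  (if i == l then round_val ((nnz_off k)%:R * `|A l k|) b1 * Num.sg (A l k * s) else 0)
  + (if i == k then round_val `|A k k| b2 * Num.sg (A k k * s) else 0).

(* F(A,v) for a joint outcome w of all particles (annihilation = summation) *)
Definition Fstep (v : 'I_N -> int) (w : {ffun particle v -> outcome}) (i : 'I_N) : R :=
  \sum_(p : particle v) particle_contrib (tag p) (sgnv v (tag p)) (w p) i.

Definition joint_prob (v : 'I_N -> int) (w : {ffun particle v -> outcome}) : R :=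
  \prod_(p : particle v) particle_prob (tag p) (w p).

(* E( ||F(A,v) - A v||_2^2 ), conditionally on v_t = v *)
Definition expected_sqerr (v : 'I_N -> int) : R :=
  \sum_(w : {ffun particle v -> outcome})
     joint_prob w * \sum_i (Fstep w i - Amulv v i) ^+ 2.

Definition C_e : R :=
  (\big[Num.max/0]_k (((nnz_col k)%:R - 2) * sqnorm_off k) + 2^-1) / norm1_mx ^+ 2.

End FCIQMC.

(* Main.v *)
Require Import Defs.
From HB Require Import structures.
From mathcomp Require Import all_boot all_order all_algebra.
From mathcomp Require Import ring lra.
Import Defs.
Set Implicit Arguments. Unset Strict Implicit. Unset Printing Implicit Defensive.
Import Order.TTheory GRing.Theory Num.Theory.
Local Open Scope ring_scope.

Section Round.
Variable R : archiRealFieldType.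
Implicit Types Q : R.

Lemma rv_true Q : round_val Q true = (Num.floor Q)%:~R + 1.
Proof. by rewrite /round_val intrD. Qed.
Lemma rv_false Q : round_val Q false = (Num.floor Q)%:~R.
Proof. by rewrite /round_val addr0. Qed.
Lemma frac_ge0 Q : 0 <= frac Q.
Proof. by rewrite /frac subr_ge0 Num.Theory.floor_le. Qed.
Lemma frac_lt1 Q : frac Q < 1.
Proof. have := Num.Theory.floorD1_gt Q; rewrite intrD /frac; lra. Qed.
Lemma rp_ge0 Q b : 0 <= round_prob Q b.
Proof. have := frac_ge0 Q; have := frac_lt1 Q; case: b => /=; lra. Qed.
Lemma rp_sum Q : \sum_b round_prob Q b = 1.
Proof. by rewrite big_bool /=; ring. Qed.
Lemma rp_mean Q : \sum_b round_prob Q b * round_val Q b = Q.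
Proof. by rewrite big_bool /= rv_true rv_false /frac; ring. Qed.
Lemma rp_sq Q : \sum_b round_prob Q b * round_val Q b ^+ 2 = Q ^+ 2 + frac Q * (1 - frac Q).
Proof. by rewrite big_bool /= rv_true rv_false /frac; ring. Qed.
Lemma frac_quarter Q : frac Q * (1 - frac Q) <= 4^-1.
Proof.
have h : frac Q * (1 - frac Q) = 4^-1 - (frac Q - 2^-1)^+2.
  rewrite (_ : (4:R)^-1 = 2^-1 * 2^-1); last by rewrite -invfM; congr (_^-1); ring.
  set t := (2:R)^-1; have ht : 2 * t = 1 by rewrite /t mulfV // pnatr_eq0.
  have -> : frac Q * (1 - frac Q) = frac Q * (2*t - frac Q) by rewrite ht.
  ring.
by rewrite h lerBlDr lerDl sqr_ge0.
Qed.
End Round.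

Lemma sum_if0 (R : archiRealFieldType) (I : finType) (a : I) (x : I -> R) :
  \sum_i (if i == a then x i else 0) = x a.
Proof.
by rewrite (bigD1 a) //= eqxx big1 ?addr0 // => i /negbTE ->.
Qed.

Lemma sum_outcome (R : archiRealFieldType) N (F : outcome N -> R) :
  \sum_o F o = \sum_l \sum_b1 \sum_b2 F (l, b1, b2).
Proof.
transitivity (\sum_(p : 'I_N * bool) \sum_b2 F (p, b2)).
  by rewrite pair_bigA /=; apply: eq_bigr => -[p b] _.
by rewrite (pair_bigA _ (fun l b1 => \sum_b2 F (l, b1, b2))); apply: eq_bigr => -[].
Qed.

Lemma sum_sq2 (R : archiRealFieldType) N (l k : 'I_N) (a b : R) : l != k ->
  \sum_j ((if j == l then a else 0) + (if j == k then b else 0))^+2 = a^+2 + b^+2.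
Proof.
move=> nlk.
rewrite (eq_bigr (fun j => (if j == l then a^+2 else 0) + (if j == k then b^+2 else 0))).
  by rewrite big_split /= !sum_if0.
move=> j _; case: (eqVneq j l) => [->|njl] /=.
  by case: eqVneq nlk => // _ _; rewrite !addr0.
by rewrite !add0r; case: (j == k) => //; rewrite expr2 mul0r.
Qed.

Lemma var_id (R : archiRealFieldType) N (O : finType) (P : O -> R) (c : O -> 'I_N -> R) (mu : 'I_N -> R)
  (HP1 : \sum_o P o = 1) (Hm : forall j, \sum_o P o * c o j = mu j) :
  \sum_o P o * \sum_j (c o j - mu j)^+2 = \sum_o P o * \sum_j (c o j)^+2 - \sum_j mu j ^+2.
Proof.
under eq_bigr do rewrite mulr_sumr.
rewrite exchange_big /=.
under [X in _ = X - _]eq_bigr do rewrite mulr_sumr.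
rewrite [X in _ = X - _]exchange_big /= -sumrB; apply: eq_bigr => j _.
have e : forall o, P o * (c o j - mu j) ^+ 2 = P o * c o j ^+ 2 - 2 * mu j * (P o * c o j) + mu j ^+ 2 * P o.
  by move=> o; ring.
rewrite (eq_bigr _ (fun o _ => e o)) big_split /= sumrB -!mulr_sumr Hm HP1; ring.
Qed.

Lemma nnz_col_off (R : archiRealFieldType) N (A : 'M[R]_N) k : A k k != 0 ->
  nnz_col A k = (nnz_off A k).+1.
Proof.
move=> Hk; rewrite /nnz_col /nnz_off.
have -> : [set i | A i k != 0] = k |: [set j | (j != k) && (A j k != 0)].
  apply/setP => i; rewrite !inE; case: (eqVneq i k) => [->|] //=.
by rewrite cardsU1 inE eqxx.
Qed.

Lemma normK2 (R : archiRealFieldType) (y : R) : `|y| ^+ 2 = y ^+ 2.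
Proof. exact: real_normK (num_real y). Qed.

Section Particle.
Variables (R : archiRealFieldType) (N : nat) (A : 'M[R]_N) (k : 'I_N) (x : R).
Hypothesis HAkk : A k k != 0.
Hypothesis Hoff : (1 <= nnz_off A k)%N.
Hypothesis Hx : x != 0.
Let s := Num.sg x.
Let d : R := (nnz_off A k)%:R.
Let Pl (l : 'I_N) : R := if (l != k) && (A l k != 0) then d^-1 else 0.

Lemma d_neq0 : d != 0.
Proof. by rewrite /d pnatr_eq0 -lt0n. Qed.

Lemma sum_Pl (h : 'I_N -> R) : \sum_l Pl l * h l = d^-1 * \sum_(l | (l != k) && (A l k != 0)) h l.
Proof.
rewrite mulr_sumr [RHS]big_mkcond /=; apply: eq_bigr => l _; rewrite /Pl.
by case: ifP => _; rewrite ?mul0r.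
Qed.

Lemma sum_Pl1 : \sum_l Pl l = 1.
Proof.
rewrite (eq_bigr (fun l => Pl l * 1)) ?sum_Pl; last by move=> *; rewrite mulr1.
rewrite sumr_const -mulr_natr mul1r (_ : #|_| = nnz_off A k) ?mulVf ?d_neq0 //.
by rewrite /nnz_off cardsE.
Qed.

Lemma PP_eq l b1 b2 : particle_prob A k (l, b1, b2) =
  Pl l * round_prob (d * `|A l k|) b1 * round_prob `|A k k| b2.
Proof. by []. Qed.

Lemma M1 : \sum_o particle_prob A k o = 1.
Proof.
rewrite sum_outcome -[RHS]sum_Pl1; apply: eq_bigr => l _.
by rewrite !big_bool !PP_eq /round_prob /=; ring.
Qed.

Lemma sgs y : Num.sg (y * s) = Num.sg y * s.
Proof. by rewrite sgrM /s sgr_id. Qed.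

Lemma M2 j : \sum_o particle_prob A k o * particle_contrib A k s o j = A j k * s.
Proof.
rewrite sum_outcome.
under eq_bigr => l _.
  have -> : \sum_b1 \sum_b2 particle_prob A k (l, b1, b2) * particle_contrib A k s (l, b1, b2) j
     = Pl l * ((if j == l then d * `|A l k| * Num.sg (A l k * s) else 0)
              + (if j == k then `|A k k| * Num.sg (A k k * s) else 0)).
    rewrite !big_bool !PP_eq /particle_contrib /= !rv_true !rv_false /round_prob /frac.
    by case: (j == l); case: (j == k); ring.
  over.
under eq_bigr do rewrite /= mulrDr.
rewrite big_split /= -mulr_suml sum_Pl1 mul1r.
rewrite (eq_bigr (fun l => if l == j then Pl j * (d * `|A j k| * Num.sg (A j k * s)) else 0)); last first.
  by move=> l _; rewrite eq_sym; case: eqP => [->|]; rewrite ?mulr0.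
rewrite sum_if0 !sgs /Pl.
case: (eqVneq j k) => [->|njk] /=.
  by rewrite mul0r add0r -[in RHS](mulr_sg_norm (A k k)); ring.
rewrite addr0; case: (eqVneq (A j k) 0) => [->|nz] /=; first by rewrite mul0r mul0r.
rewrite -[in RHS](mulr_sg_norm (A j k)).
have := d_neq0; move=> dn; by field.
Qed.

Let Q1 l := d * `|A l k|.
Let Q2 := `|A k k|.
Let phi (q : R) := frac q * (1 - frac q).

Lemma s2 : s ^+ 2 = 1.
Proof. by rewrite /s sqr_sg Hx. Qed.

Lemma E2 : \sum_o particle_prob A k o * \sum_j (particle_contrib A k s o j)^+2 =
  \sum_l Pl l * (Q1 l ^+ 2 + phi (Q1 l) + (Q2 ^+2 + phi Q2)).
Proof.
rewrite sum_outcome; apply: eq_bigr => l _.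
case: (boolP ((l != k) && (A l k != 0))) => [/andP [nlk nz]|nc]; last first.
  rewrite /Pl (negbTE nc) mul0r big1 // => b1 _; rewrite big1 // => b2 _.
  by rewrite PP_eq /Pl (negbTE nc) !mul0r.
have e : forall b1 b2, \sum_j (particle_contrib A k s (l, b1, b2) j)^+2 =
    round_val (Q1 l) b1 ^+ 2 + round_val Q2 b2 ^+ 2.
  move=> b1 b2; rewrite /particle_contrib sum_sq2 // !exprMn !sgs !exprMn s2 !sqr_sg nz HAkk.
  by rewrite !mulr1.
under eq_bigr do under eq_bigr do rewrite e.
rewrite /Q1 /Q2 !big_bool !PP_eq /Pl nlk nz /= !rv_true !rv_false /Q1 /Q2 /round_prob /phi /frac; ring.
Qed.

Lemma Pl_ge0 l : 0 <= Pl l.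
Proof. by rewrite /Pl; case: ifP => _ //; rewrite invr_ge0 ler0n. Qed.

Lemma var_bound : \sum_o particle_prob A k o * \sum_j (particle_contrib A k s o j - A j k * s)^+2
   <= ((nnz_col A k)%:R - 2) * sqnorm_off A k + 2^-1.
Proof.
rewrite (var_id M1 M2) E2.
have eS : \sum_j (A j k * s)^+2 = A k k ^+2 + sqnorm_off A k.
  by under eq_bigr do rewrite exprMn s2 mulr1; rewrite (bigD1 k).
have eQ : \sum_l Pl l * Q1 l ^+2 = d * sqnorm_off A k.
  rewrite sum_Pl /sqnorm_off /Q1.
  have -> : \sum_(l | (l != k) && (A l k != 0)) (d * `|A l k|) ^+ 2 = d^+2 * \sum_(i | i != k) A i k ^+ 2.
    rewrite mulr_sumr big_mkcond [RHS]big_mkcond; apply: eq_bigr => l _ /=.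
    case: (l != k) => //=; case: eqVneq => [->|_] /=; first by rewrite expr0n /= mulr0.
    by rewrite exprMn normK2.
  have := d_neq0; move=> dn; by field.
have eP : \sum_l Pl l * phi (Q1 l) <= 4^-1.
  apply: (@le_trans _ _ (\sum_l Pl l * 4^-1)).
    by apply: ler_sum => l _; apply: ler_wpM2l; [exact: Pl_ge0 | exact: frac_quarter].
  by rewrite -mulr_suml sum_Pl1 mul1r.
have eP2 : phi Q2 <= 4^-1 by exact: frac_quarter.
have e : \sum_l Pl l * (Q1 l ^+ 2 + phi (Q1 l) + (Q2 ^+ 2 + phi Q2)) =
   \sum_l Pl l * Q1 l ^+2 + \sum_l Pl l * phi (Q1 l) + (Q2 ^+ 2 + phi Q2).
  rewrite -[in RHS](mul1r (Q2 ^+ 2 + phi Q2)) -sum_Pl1 mulr_suml -!big_split /=.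
  by apply: eq_bigr => l _; ring.
rewrite e eS eQ /Q2 normK2 nnz_col_off // -/d.
have h4 : (4:R)^-1 + 4^-1 = 2^-1.
  by field.
move: eP2; rewrite /Q2 => eP2.
have -> : (nnz_off A k).+1%:R = d + 1 :> R by rewrite /d -addn1 natrD.
have -> : (d + 1 - 2) * sqnorm_off A k = d * sqnorm_off A k - sqnorm_off A k by ring.
lra.
Qed.
End Particle.

Section Gen.
Variable R : archiRealFieldType.
Lemma prod_if1 (I : finType) (a : I) (x : I -> R) :
  \prod_i (if i == a then x i else 1) = x a.
Proof.
by rewrite (bigD1 a) //= eqxx big1 ?mulr1 // => i /negbTE ->.
Qed.
Lemma indep_sq (I O : finType) (P : I -> O -> R) (g : I -> O -> R)
 (HP1 : forall i, \sum_o P i o = 1)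
 (Hg0 : forall i, \sum_o P i o * g i o = 0) :
 \sum_(w : {ffun I -> O}) (\prod_i P i (w i)) * (\sum_i g i (w i))^+2
   = \sum_i \sum_o P i o * g i o ^+ 2.
Proof.
have key : forall a b, \sum_(w : {ffun I -> O}) (\prod_i P i (w i)) * (g a (w a) * g b (w b))
   = \prod_i \sum_o (P i o * ((if i == a then g a o else 1) * (if i == b then g b o else 1))).
  move=> a b; rewrite bigA_distr_bigA; apply: eq_bigr => w _.
  by rewrite big_split /= big_split /= prod_if1 prod_if1.
have ex : forall w : {ffun I -> O}, (\prod_i P i (w i)) * (\sum_i g i (w i))^+2 =
   \sum_a \sum_b (\prod_i P i (w i)) * (g a (w a) * g b (w b)).
  move=> w; rewrite expr2 mulr_suml mulr_sumr; apply: eq_bigr => a _.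
  by rewrite mulr_sumr mulr_sumr.
under eq_bigr => w _ do rewrite ex.
rewrite exchange_big /=; apply: eq_bigr => a _.
rewrite exchange_big /= (bigD1 a) //= key.
rewrite [X in _ + X = _]big1 ?addr0.
  rewrite (bigD1 a) //= [X in _ * X]big1 ?mulr1; last first.
    move=> i ni; rewrite (eq_bigr (P i)) ?HP1 // => o _; by rewrite (negbTE ni) !mulr1.
  by apply: eq_bigr => o _; rewrite eqxx expr2.
move=> b nba; rewrite key (bigD1 a) //= (_ : \sum_o _ = 0) ?mul0r //.
rewrite (eq_bigr (fun o => P a o * g a o)) ?Hg0 // => o _; by rewrite eqxx eq_sym (negbTE nba) mulr1.
Qed.
End Gen.

Lemma sum_particle (R : archiRealFieldType) N (v : 'I_N -> int) (G : 'I_N -> R) :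
  \sum_(p : particle v) G (tag p) = \sum_k (absz (v k))%:R * G k.
Proof.
have := @sig_big_dep R 0 +%R 'I_N (fun k => 'I_(absz (v k))) xpredT (fun _ _ => true) (fun k _ => G k).
move=> /= <-; apply: eq_bigr => k _.
by rewrite sumr_const card_ord mulr_natl.
Qed.

Unset Implicit Arguments.
Set Strict Implicit.
Theorem mainTheorem5 (R : archiRealFieldType) (N : nat) (A : 'M[R]_N)
  (Hsym : A^T = A)
  (Hdiag : forall k : 'I_N, A k k != 0)
  (Hcol : forall k : 'I_N, (2 <= nnz_col A k)%N)
  (m : R) (Hm : 0 < m)
  (v : 'I_N -> int) (HM : m <= @norm1_int R N v) :
  expected_sqerr A v <= C_e A * norm1_mx A ^+ 2 * @norm1_int R N v ^+ 2 / m.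
Proof.
set M := @norm1_int R N v.
set K := \big[Num.max/0]_k (((nnz_col A k)%:R - 2) * sqnorm_off A k) + 2^-1.
have Hoff : forall k, (1 <= nnz_off A k)%N.
  by move=> k; have := Hcol k; rewrite nnz_col_off.
have Mpos : 0 < M by apply: lt_le_trans HM.
have k0 : 'I_N.
  case: (posnP N) => [N0|Npos]; last exact: Ordinal Npos.
  exfalso; move: Mpos; rewrite /M /norm1_int big1 ?ltxx // => k; move: (ltn_ord k); by rewrite {2}N0 ltn0.
have n1pos : 0 < norm1_mx A.
  apply: (@lt_le_trans _ _ (\sum_i `|A i k0|)); last exact: le_bigmax.
  rewrite (bigD1 k0) //=; apply: (@lt_le_trans _ _ `|A k0 k0|); first by rewrite normr_gt0.
  by rewrite lerDl sumr_ge0.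
have Kpos : 0 <= K.
  by apply: addr_ge0; [exact: bigmax_ge_id | rewrite invr_ge0 ler0n].
have CeK : C_e A * norm1_mx A ^+ 2 = K.
  rewrite /C_e -/K; have n1n : norm1_mx A != 0 by rewrite gt_eqF.
  by field.
rewrite CeK.
have HE : expected_sqerr A v <= K * M.
  pose g (j : 'I_N) (p : particle v) (o : outcome N) :=
    particle_contrib A (tag p) (sgnv R v (tag p)) o j - A j (tag p) * sgnv R v (tag p).
  have Hx : forall p : particle v, (v (tag p))%:~R != 0 :> R.
    move=> p; rewrite intr_eq0 -absz_gt0.
    exact: (leq_ltn_trans (leq0n _) (ltn_ord (tagged p))).
  have HP1 : forall p : particle v, \sum_o particle_prob A (tag p) o = 1.
    by move=> p; exact: M1 (Hoff (tag p)).
  have Hg0 : forall j (p : particle v), \sum_o particle_prob A (tag p) o * g j p o = 0.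
    move=> j p; rewrite /g; under eq_bigr do rewrite mulrBr.
    by rewrite sumrB (M2 _ (Hoff (tag p))) -mulr_suml HP1 mul1r subrr.
  have eF : forall w j, Fstep A w j - Amulv A v j = \sum_p g j p (w p).
    move=> w j; rewrite /Fstep /g sumrB; congr (_ - _).
    rewrite (sum_particle v (fun k => A j k * sgnv R v k)) /Amulv; apply: eq_bigr => k _.
    by rewrite /sgnv natr_absz intr_norm mulrCA (mulrC `|_|) mulr_sg_norm.
  rewrite /expected_sqerr.
  under eq_bigr => w _.
    rewrite (eq_bigr (fun j => (\sum_p g j p (w p))^+2)); last by move=> j _; rewrite eF.
    rewrite mulr_sumr.
    over.
  rewrite exchange_big /=.
  under eq_bigr => j _ do rewrite (indep_sq HP1 (Hg0 j)).
  rewrite exchange_big /=.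
  under eq_bigr => p _ do rewrite exchange_big /=.
  under eq_bigr => p _ do under eq_bigr => o _ do rewrite -mulr_sumr.
  apply: (@le_trans _ _ (\sum_(p : particle v) K)).
    apply: ler_sum => p _; rewrite /g.
    apply: le_trans (@var_bound _ _ A (tag p) _ (Hdiag _) (Hoff _) (Hx p)) _.
    by rewrite /K lerD2r; apply: le_bigmax.
  rewrite (sum_particle v (fun _ => K)) -mulr_suml mulrC /M /norm1_int.
  by under [X in _ <= _ * X]eq_bigr do rewrite -intr_norm -natr_absz.
apply: (le_trans HE); rewrite ler_pdivlMr //.
rewrite expr2 mulrA; apply: ler_wpM2l => //; exact: mulr_ge0 Kpos (ltW Mpos).
Qed.
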